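(* Let $k\in\mathbb{Z}_+$ and let $a\in L_1(\mathbb{R}_+)$ be such that $\gamma_{a,k}\in L_\infty(\mathbb{R}_+)$, where $\gamma_{a,k}(\xi)=2\xi\int_{\mathbb{R}_+}a(v)\,\ell_k^2(2v\xi)\,\mathrm{d}v$, $\xi>0$. Then for each $n=1,2,\dots$, $$\lim_{\xi\to+\infty}\frac{\mathrm{d}^n\gamma_{a,k}(\xi)}{\mathrm{d}\xi^n}=0.$$
   Context: $\mathbb{R}_+=(0,\infty)$, $\mathbb{Z}_+=\{0,1,2,\dots\}$. $L_k(x)=\sum_{i=0}^k(-1)^i\binom{k}{i}\frac{x^i}{i!}$ is the Laguerre polynomial of degree $k$ and $\ell_k(x)=e^{-x/2}L_k(x)$. *)

(* Defs.v *)
From HB Require Import structures.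
From mathcomp Require Import all_boot all_order all_algebra.
From mathcomp Require Import all_classical all_reals all_analysis.
Set Implicit Arguments. Unset Strict Implicit. Unset Printing Implicit Defensive.
Import Order.TTheory GRing.Theory Num.Theory.
Import numFieldNormedType.Exports.
Local Open Scope classical_set_scope.
Local Open Scope ring_scope.

Definition laguerre {R : realType} (k : nat) (x : R) : R :=
  \sum_(0 <= i < k.+1) ((-1) ^+ i * ('C(k, i))%:R * x ^+ i / (i`!)%:R).

Definition laguerre_fun {R : realType} (k : nat) (x : R) : R :=
  expR (- x / 2) * laguerre k x.

Definition gamma_ak {R : realType} (a : R -> R) (k : nat) (xi : R) : R :=
  2 * xi * Rintegral (@lebesgue_measure R) `]0, +oo[%classic
    (fun v => a v * (laguerre_fun k (2 * v * xi)) ^+ 2).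

(* Main.v *)
Require Import Defs.
From HB Require Import structures.
From mathcomp Require Import all_boot all_order all_algebra.
From mathcomp Require Import all_classical all_reals all_analysis.
From mathcomp Require Import ring lra measurable_realfun lebesgue_integral_under.
Import Order.TTheory GRing.Theory Num.Theory.
Import numFieldNormedType.Exports.
Local Open Scope classical_set_scope.
Local Open Scope ring_scope.

Section aux.
Context {R : realType}.

Lemma powle_fact (x : R) (j : nat) : 0 <= x -> x ^+ j <= (j`!)%:R * expR x.
Proof.
move=> x0; case: j => [|j].
  by rewrite expr0 fact0 mul1r -expR0 ler_expR.
have h := expR_ge1Dxn j x0.
have h2 : x ^+ j.+1 / (j.+1`!)%:R <= expR x.
  by apply: le_trans h; rewrite lerDr.
by rewrite ler_pdivrMr ?ltr0n ?fact_gt0 // mulrC in h2.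
Qed.

Definition phi (j : nat) (x : R) := x ^+ j * expR (- x).

Lemma phi_ge0 j x : 0 <= x -> 0 <= phi j x.
Proof. by move=> x0; rewrite /phi mulr_ge0 ?exprn_ge0 ?expR_ge0. Qed.

Lemma phi_le j x : 0 <= x -> phi j x <= (j`!)%:R.
Proof.
move=> x0; rewrite /phi expRN.
rewrite ler_pdivrMr ?expR_gt0 //; exact: powle_fact.
Qed.

Lemma phi_le2 j x : 0 < x -> phi j x <= (j.+1`!)%:R / x.
Proof.
move=> x0; rewrite ler_pdivlMr //.
have -> : phi j x * x = phi j.+1 x by rewrite /phi exprSr mulrAC.
exact/phi_le/ltW.
Qed.

Definition hk (j : nat) (xi v : R) := (2 * v) ^+ j * expR (- (2 * v * xi)).

Lemma hk_ge0 j xi v : 0 <= v -> 0 <= hk j xi v.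
Proof. by move=> v0; rewrite /hk mulr_ge0 ?exprn_ge0 ?expR_ge0 ?mulr_ge0. Qed.

Lemma hk_phi j xi v : hk j xi v * xi ^+ j = phi j (2 * v * xi).
Proof. by rewrite /hk /phi [in RHS]exprMn mulrAC. Qed.

Lemma hk_le j xi v : 0 < xi -> 0 <= v -> hk j xi v <= (j`!)%:R / xi ^+ j.
Proof.
move=> xi0 v0; rewrite ler_pdivlMr ?exprn_gt0 // hk_phi.
by apply: phi_le; rewrite !mulr_ge0 // ltW.
Qed.

Lemma measurable_hk j xi : measurable_fun setT (hk j xi).
Proof.
apply: measurable_funM.
  by apply: measurable_funX; apply: measurable_funM.
apply: measurableT_comp; first exact: measurable_expR.
apply: measurableT_comp => //.
by apply: measurable_funM => //; apply: measurable_funM.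
Qed.



Local Notation mu := (@lebesgue_measure R).
Local Notation B := (`]0%R, +oo[%classic : set (measurableTypeR R)).

Lemma mB : measurable B. Proof. exact: measurable_itv. Qed.

Variable a : R -> R.
Hypothesis ia : mu.-integrable B (EFin \o a).

Lemma ma : measurable_fun B a.
Proof. by apply/measurable_EFinP; exact: (measurable_int mu ia). Qed.

Lemma int_aM (h : R -> R) (C : R) : measurable_fun setT h ->
  (forall v, B v -> `|h v| <= C) -> mu.-integrable B (EFin \o (fun v => a v * h v)).
Proof.
move=> mh hC.
apply: (@le_integrable _ _ _ mu B mB _ (EFin \o (fun v => C * `|a v|))).
- apply/measurable_EFinP; apply: measurable_funM; first exact: ma.
  exact: measurable_funTS.
- move=> v Bv /=; rewrite lee_fin.
  apply: le_trans (ler_norm _).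
  by rewrite normrM mulrC ler_wpM2r // hC.
- have := integrableZl mB C (integrable_norm ia).
  move=> H; apply: (eq_integrable mB _ _ _ H) => v _ /=; by rewrite EFinM.
Qed.


Lemma is_derive_hk (j : nat) (xi v : R) : is_derive xi 1 (fun x => hk j x v) (- hk j.+1 xi v).
Proof.
have e : (fun x => hk j x v) = ((2*v)^+j) \*: (expR \o ((- (2*v)) \*: id)).
  by apply/funext => x; rewrite /hk /= /GRing.scale /= mulNr.
rewrite e.
have h2 : is_derive xi 1 (expR \o ((- (2*v)) \*: id)) (expR ((- (2*v)) *: xi) * ((- (2*v)) *: 1)).
  by apply: is_derive1_comp.
apply: is_derive_eq.
rewrite /hk /GRing.scale /= exprS mulNr; set p := _ ^+ j; set E := expR _; ring.
Qed.

Lemma Bpos (v : R) : B v -> 0 < v.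
Proof. by rewrite /= in_itv /= andbT. Qed.

Lemma hk_mono j c x y : 0 <= y -> c <= x -> hk j x y <= hk j c y.
Proof.
move=> y0 cx; rewrite /hk ler_wpM2l ?exprn_ge0 ?mulr_ge0 // ler_expR lerN2.
by rewrite ler_wpM2l // mulr_ge0.
Qed.

Definition H j xi := \int[mu]_(v in B) (a v * hk j xi v).

Lemma int_hk j xi : 0 < xi -> mu.-integrable B (EFin \o (fun v => a v * hk j xi v)).
Proof.
move=> xi0; apply: (@int_aM _ ((j`!)%:R / xi ^+ j)); first exact: measurable_hk.
move=> v /Bpos v0; rewrite ger0_norm; last exact: hk_ge0 (ltW v0).
exact: hk_le xi0 (ltW v0).
Qed.

Lemma is_derive_ahk (j : nat) (xi y : R) :
  is_derive xi 1 (fun x => a y * hk j x y) (- (a y * hk j.+1 xi y)).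
Proof.
apply: is_derive_eq (is_deriveZ (a y) (is_derive_hk j xi y)) _.
by rewrite /GRing.scale /= mulrN.
Qed.

Lemma dH (j : nat) (xi0 : R) : 0 < xi0 -> is_derive xi0 1 (H j) (- H j.+1 xi0).
Proof.
move=> xi0p.
set f := fun x y => a y * hk j x y.
have I0 : `]xi0 / 2, 2 * xi0[%classic xi0.
  by rewrite /= in_itv /=; apply/andP; split; lra.
have Ipos x : `]xi0 / 2, 2 * xi0[%classic x -> 0 < x.
  by rewrite /= in_itv /= => /andP[h _]; lra.
have Ic x : `]xi0 / 2, 2 * xi0[%classic x -> xi0 / 2 <= x.
  by rewrite /= in_itv /= => /andP[h _]; lra.
pose c := (j.+1`!)%:R / (xi0 / 2) ^+ j.+1.
have c0 : 0 <= c by rewrite /c divr_ge0 // exprn_ge0 //; lra.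
pose G := fun y => c * `|a y|.
have intf x : `]xi0 / 2, 2 * xi0[%classic x -> mu.-integrable B (EFin \o f x).
  by move=> /Ipos; exact: int_hk.
have derf1 x y : `]xi0 / 2, 2 * xi0[%classic x -> B y -> derivable (f^~ y) x 1.
  by move=> _ _; have [] := is_derive_ahk j x y.
have d1f x y : partial1of2 f x y = - (a y * hk j.+1 x y).
  by rewrite partial1of2E; have := is_derive_ahk j x y => dd; rewrite derive_val.
have G0 y : 0 <= G y by rewrite /G mulr_ge0.
have intG : mu.-integrable B (EFin \o G).
  apply: (eq_integrable mB _ _ _ (integrableZl mB c (integrable_norm ia))).
  by move=> v _ /=; rewrite EFinM.
have G_ub x y : `]xi0 / 2, 2 * xi0[%classic x -> B y -> `|partial1of2 f x y| <= G y.
  move=> Ix /Bpos y0; rewrite d1f normrN normrM /G mulrC ler_wpM2r //.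
  rewrite ger0_norm; last exact: hk_ge0 (ltW y0).
  apply: le_trans (hk_mono j.+1 _ _ _ (ltW y0) (Ic _ Ix)) _.
  apply: hk_le; [lra | exact: ltW].
have := differentiation_under_integral mB I0 intf derf1 G0 intG G_ub.
have := derivable_under_integral mB I0 intf derf1 G0 intG G_ub.
move=> /derivableP dF; rewrite derive1E => eF.
rewrite eF in dF; apply: is_derive_eq dF _.
rewrite (@eq_Rintegral _ _ _ mu _ (fun y => -1 * (a y * hk j.+1 xi0 y))); last first.
  by move=> y _; rewrite d1f mulN1r.
by rewrite RintegralZl ?mB ?int_hk // mulN1r.
Qed.


Lemma xmhk_le {m j : nat} {x v : R} : (m <= j)%N -> 1 <= x -> 0 <= v ->
  x ^+ m * hk j x v <= x ^+ j * hk j x v.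
Proof. by move=> mj x1 v0; rewrite ler_wpM2r ?hk_ge0 //; exact: ler_weXn2l. Qed.

Lemma xjhk (j : nat) (x v : R) : x ^+ j * hk j x v = phi j (2 * v * x).
Proof. by rewrite mulrC hk_phi. Qed.

Lemma lim_term (m j : nat) : (m <= j)%N ->
  (xi ^+ m * H j xi) @[xi --> +oo] --> (0 : R).
Proof.
move=> mj.
apply/cvg_pinftyP => u uoo.
pose w n := Num.max (u n) 1.
have w1 n : 1 <= w n by rewrite /w le_max lexx orbT.
have w0 n : 0 < w n by apply: lt_le_trans (w1 n).
have wu n : u n <= w n by rewrite /w le_max lexx.
have ew : \forall n \near \oo, w n = u n.
  move/cvgryPgt : uoo => /(_ 1); apply: filterS => n un1.
  by rewrite /w max_l // ltW.
suff h : (w n ^+ m * H j (w n)) @[n --> \oo] --> (0 : R).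
  apply: (cvg_trans _ h); apply: near_eq_cvg; by apply: filterS ew => n ->.
pose F n v := a v * (w n ^+ m * hk j (w n) v).
have eF n : w n ^+ m * H j (w n) = \int[mu]_(v in B) F n v.
  rewrite /H -RintegralZl ?mB ?int_hk //; apply: eq_Rintegral => v _.
  by rewrite /F mulrCA.
have Fb n v : B v -> `|w n ^+ m * hk j (w n) v| <= (j`!)%:R.
  move=> /Bpos v0; rewrite ger0_norm; last by rewrite mulr_ge0 ?exprn_ge0 ?hk_ge0 // ltW.
  apply: le_trans (xmhk_le mj (w1 n) (ltW v0)) _; rewrite xjhk; apply: phi_le.
  by rewrite mulr_ge0 ?mulr_ge0 // ltW.
have intF n : mu.-integrable B (EFin \o F n).
  apply: (@int_aM (fun v => w n ^+ m * hk j (w n) v) (j`!)%:R _ (Fb n)).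
  by apply: measurable_funM => //; exact: measurable_hk.
have mf_ n : measurable_fun B (fun v => (F n v)%:E) by exact: (measurable_int mu (intF n)).
have ig : mu.-integrable B (fun v => ((j`!)%:R * `|a v|)%:E).
  apply: (eq_integrable mB _ _ _ (integrableZl mB (j`!)%:R (integrable_norm ia))).
  by move=> v _ /=; rewrite EFinM.
have f_g : {ae mu, forall v n, B v -> (`|(F n v)%:E| <= ((j`!)%:R * `|a v|)%:E)%E}.
  apply: aeW => v n Bv; rewrite lee_fin /F normrM mulrC ler_wpM2r //.
  exact: Fb.
have f_f : {ae mu, forall v, B v -> (F n v)%:E @[n --> \oo] --> (cst 0%E v : \bar R)}.
  apply: aeW => v /Bpos v0; apply: cvg_EFin; first exact: nearW.
  pose K := `|a v| * ((j.+1`!)%:R / (2 * v)).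
  have bnd n : `|F n v| <= K / w n.
    rewrite /F normrM /K -mulrA ler_wpM2l //.
    rewrite ger0_norm; last by rewrite mulr_ge0 ?exprn_ge0 ?hk_ge0 // ltW.
    apply: le_trans (xmhk_le mj (w1 n) (ltW v0)) _; rewrite xjhk.
    apply: le_trans (phi_le2 j (2 * v * w n) _) _; first by rewrite !mulr_gt0.
    by rewrite invfM mulrA.
  apply/cvgrPdist_lt => e e0.
  move/cvgryPgt : uoo => /(_ (K / e)); apply: filterS => n hn.
  rewrite /= sub0r normrN; apply: le_lt_trans (bnd n) _.
  have : K / e * e < w n * e by rewrite ltr_pM2r // (lt_le_trans hn (wu n)).
  rewrite divfK ?gt_eqF // => hK.
  by rewrite ltr_pdivrMr // mulrC.
have [_ _ conv] := dominated_convergence mB mf_ (measurable_cst _) f_f ig f_g.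
rewrite integral0 in conv.
have h := fine_cvg conv.
apply: (cvg_trans _ (h _)); apply: near_eq_cvg; apply: nearW => n /=.
by rewrite eF.
Qed.


Definition term (t : R * nat * nat) (xi : R) := t.1.1 * xi ^+ t.1.2 * H t.2 xi.
Definition ev (s : seq (R * nat * nat)) (xi : R) := \sum_(t <- s) term t xi.
Definition dterm (t : R * nat * nat) : seq (R * nat * nat) :=
  [:: (t.1.1 * t.1.2%:R, t.1.2.-1, t.2); (- t.1.1, t.1.2, t.2.+1)].
Fixpoint dev (s : seq (R * nat * nat)) : seq (R * nat * nat) :=
  if s is t :: s' then dterm t ++ dev s' else [::].

Lemma is_derive_term (t : R * nat * nat) (xi : R) : 0 < xi ->
  is_derive xi 1 (term t) (ev (dterm t) xi).
Proof.
move=> xi0; case: t => [[c m] j].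
have e : term (c, m, j) = (c \*: (@id R ^+ m)) * H j.
  by apply/funext => x; rewrite /term /= exprfctE.
rewrite e.
have h := is_deriveM (is_deriveZ c (is_deriveX m (@is_derive_id _ _ xi 1))) (dH j xi xi0).
apply: is_derive_eq h _.
rewrite /ev /dterm /= !big_cons big_nil addr0 /term /= exprfctE /GRing.scale /=.

set p := xi ^+ m; set q := xi ^+ m.-1; set h1 := H j xi; set h2 := H j.+1 xi.
ring.
Qed.

Lemma ev_cons t s : ev (t :: s) = term t + ev s.
Proof. by apply/funext => x; rewrite /ev big_cons. Qed.

Lemma ev_cat s1 s2 x : ev (s1 ++ s2) x = ev s1 x + ev s2 x.
Proof. by rewrite /ev big_cat. Qed.

Lemma is_derive_ev s (xi : R) : 0 < xi -> is_derive xi 1 (ev s) (ev (dev s) xi).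
Proof.
move=> xi0; elim: s => [|t s IH].
  have -> : ev [::] = cst 0 by apply/funext => x; rewrite /ev big_nil.
  apply: is_derive_eq (is_derive_cst 0 xi 1) _; by rewrite /ev /=.
rewrite ev_cons (_ : dev (t :: s) = dterm t ++ dev s) // ev_cat.
exact: is_deriveD (is_derive_term t xi xi0) IH.
Qed.

Lemma lim_ev s : all (fun t : R * nat * nat => (t.1.2 <= t.2)%N) s ->
  ev s xi @[xi --> +oo] --> (0 : R).
Proof.
elim: s => [_|t s IH /andP[ht hs]].
  have -> : ev [::] = cst 0 by apply/funext => x; rewrite /ev big_nil.
  exact: cvg_cst.
rewrite ev_cons -[0 : R]addr0; apply: cvgD; last exact: IH.
have := cvgM (cvg_cst t.1.1) (lim_term _ _ ht); rewrite mulr0 => h.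
apply: (cvg_trans _ (h _ _)); apply: near_eq_cvg; apply: nearW => x /=.
by rewrite /term mulrA.
Qed.

Lemma Rint_sum (I : Type) (s : seq I) (f : I -> R -> R) :
  (forall i, mu.-integrable B (EFin \o f i)) ->
  mu.-integrable B (EFin \o (fun v => \sum_(i <- s) f i v)) /\
  \int[mu]_(v in B) (\sum_(i <- s) f i v) = \sum_(i <- s) \int[mu]_(v in B) f i v.
Proof.
move=> fi; elim: s => [|i s [IHi IHe]].
  split.
    apply: (eq_integrable mB _ _ _ (integrable0 mu B)) => v _ /=.
    by rewrite big_nil.
  rewrite big_nil (@eq_Rintegral _ _ _ mu _ (fun _ => 0)); last first.
    by move=> v _; rewrite big_nil.
  by rewrite /Rintegral integral0.
split.
  apply: (eq_integrable mB _ _ _ (integrableD mB (fi i) IHi)) => v _ /=.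
  by rewrite big_cons EFinD.
rewrite big_cons -IHe -RintegralD ?mB //.
by apply: eq_Rintegral => v _; rewrite big_cons.
Qed.


Lemma int_c j c xi : 0 < xi ->
  mu.-integrable B (EFin \o (fun v => c * (a v * hk j xi v))).
Proof.
move=> xi0; apply: (eq_integrable mB _ _ _ (integrableZl mB c (int_hk j xi xi0))).
by move=> v _ /=; rewrite EFinM.
Qed.

Lemma gamma_ev (k : nat) : exists s, all (fun t : R * nat * nat => (t.1.2 <= t.2.+1)%N) s /\
  forall xi, 0 < xi -> gamma_ak a k xi = ev s xi.
Proof.
pose b i := (-1) ^+ i * ('C(k, i))%:R / (i`!)%:R : R.
pose r := index_iota 0 k.+1.
exists [seq (2 * (b i1 * b i2), (i1 + i2).+1, (i1 + i2)%N) | i1 <- r, i2 <- r].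
split.
  by apply/allP => t /allpairsP [[i1 i2] [_ _ ->]] /=.
move=> xi xi0.
have L x : laguerre k x = \sum_(i <- r) b i * x ^+ i.
  by apply: eq_bigr => i _; rewrite /b mulrAC.
have integrand v : a v * laguerre_fun k (2 * v * xi) ^+ 2 =
    \sum_(i1 <- r) \sum_(i2 <- r) (b i1 * b i2 * xi ^+ (i1 + i2)) * (a v * hk (i1 + i2) xi v).
  transitivity (a v * expR (- (2 * v * xi)) *
      ((\sum_(i <- r) b i * (2 * v * xi) ^+ i) * (\sum_(i <- r) b i * (2 * v * xi) ^+ i))).
    rewrite /laguerre_fun L; set S := \sum_(i <- r) _; rewrite exprMn.
    have -> : expR (- (2 * v * xi) / 2) ^+ 2 = expR (- (2 * v * xi)).
      by rewrite -expRM_natl; congr expR; set y := 2 * v * xi; lra.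
    by rewrite expr2 !mulrA.
  rewrite mulr_suml mulr_sumr; apply: eq_bigr => i1 _.
  rewrite mulr_sumr mulr_sumr; apply: eq_bigr => i2 _.
  rewrite /hk !exprD [(2 * v * xi) ^+ i1]exprMn [(2 * v * xi) ^+ i2]exprMn.
  set p1 := (2 * v) ^+ i1; set p2 := (2 * v) ^+ i2; set q1 := xi ^+ i1; set q2 := xi ^+ i2.
  set E := expR _; set c1 := b i1; set c2 := b i2.
  ring.
rewrite /gamma_ak (@eq_Rintegral _ _ _ mu _ (fun v => \sum_(i1 <- r) \sum_(i2 <- r)
    (b i1 * b i2 * xi ^+ (i1 + i2)) * (a v * hk (i1 + i2) xi v))); last first.
  by move=> v _; exact: integrand.
have inner i1 := @Rint_sum _ r (fun i2 v => (b i1 * b i2 * xi ^+ (i1 + i2)) * (a v * hk (i1 + i2) xi v))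
  (fun i2 => int_c _ _ _ xi0).
rewrite (@Rint_sum _ r (fun i1 v => \sum_(i2 <- r)
    (b i1 * b i2 * xi ^+ (i1 + i2)) * (a v * hk (i1 + i2) xi v)) (fun i1 => (inner i1).1)).2.
rewrite /ev big_allpairs_dep mulr_sumr; apply: eq_bigr => i1 _.
rewrite (inner i1).2 mulr_sumr; apply: eq_bigr => i2 _.
rewrite RintegralZl ?mB ?int_hk // /term /H /= exprS.
set q := xi ^+ _; set h := Rintegral _ _ _; set c1 := b i1; set c2 := b i2.
ring.
Qed.


Lemma dev_le s : all (fun t : R * nat * nat => (t.1.2 <= t.2.+1)%N) s ->
  all (fun t : R * nat * nat => (t.1.2 <= t.2)%N) (dev s).
Proof.
elim: s => [//|[[c m] j] s IH /andP[ht hs]] /=.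
rewrite IH // andbT /=; apply/andP; split => //.
by case: m ht.
Qed.


Lemma pos_near (xi : R) : 0 < xi -> \forall x \near xi, 0 < x.
Proof.
move=> xi0; apply: filterS (@Nlt_nbhsl R xi 0 _) => [y|]; by rewrite oppr_lt0.
Qed.

Lemma deriv_rep (k n : nat) : exists s,
  all (fun t : R * nat * nat => (t.1.2 <= t.2.+1)%N) s /\
  ((0 < n)%N -> all (fun t : R * nat * nat => (t.1.2 <= t.2)%N) s) /\
  forall xi, 0 < xi -> derive1n n (gamma_ak a k) xi = ev s xi.
Proof.
elim: n => [|n [s [hs [_ e]]]].
  by have [s [hs e]] := gamma_ev k; exists s; split => //; split.
exists (dev s); have hd := dev_le _ hs.
split.
  by apply/allP => t /(allP hd) /leqW.
split => // xi xi0.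
have hd2 : is_derive xi 1 (derive1n n (gamma_ak a k)) (ev (dev s) xi).
  apply: near_eq_is_derive (is_derive_ev s xi xi0).
  by apply: filterS (pos_near _ xi0) => y y0; rewrite e.
by rewrite derive1nS derive1E derive_val.
Qed.

End aux.

Theorem mainTheorem6 (R : realType) (k : nat) (a : R -> R) :
  (@lebesgue_measure R).-integrable `]0, +oo[%classic (EFin \o a) ->
  (exists M : R, {ae @lebesgue_measure R, forall xi : R,
      xi \in `]0, +oo[%classic -> `|gamma_ak a k xi| <= M}) ->
  forall n : nat, (0 < n)%N ->
    (forall xi : R, 0 < xi -> derivable (derive1n n.-1 (gamma_ak a k)) xi 1) /\
    (derive1n n (gamma_ak a k) xi @[xi --> +oo] --> (0 : R)).
Proof.
move=> ia _ n n0; split.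
  move=> xi xi0.
  have [s [_ [_ e]]] := deriv_rep a ia k n.-1.
  have hd2 : is_derive xi 1 (derive1n n.-1 (gamma_ak a k)) (ev a (dev s) xi).
    apply: near_eq_is_derive (is_derive_ev a ia s xi xi0).
    by apply: filterS (pos_near _ xi0) => y y0; rewrite e.
  by case: hd2.
have [s [_ [hs e]]] := deriv_rep a ia k n.
apply: (cvg_trans _ (lim_ev a ia _ (hs n0))); apply: near_eq_cvg.
by apply: filterS (nbhs_pinfty_gt (@real0 R)) => y y0; rewrite e.
Qed.
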